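(* Let $\mathcal{A}=\{1,\dots,L\}$ and let $Q_T$ be a pmf on $\mathcal{A}$ with $Q_T(a)>0$ for all $a$ and $Q_T\neq U_L$. Let $I>\log_2L$ and, for each $n$, let $\mathcal{S}_n=\{a^n\in\mathcal{A}^n: H(\pi(a^n),Q_T)\le I\}$ and $P_{A^n}=U_{\mathcal{S}_n}$ (the uniform pmf on $\mathcal{S}_n$). Then $D(P_{A^n}\|Q_T^n)$ scales linearly with $n$: there exist constants $0<c_1\le c_2<\infty$ such that $c_1n\le D(P_{A^n}\|Q_T^n)\le c_2n$ for all sufficiently large $n$.
   Context: $U_L$ is the uniform pmf on $\mathcal{A}$. $H(P,Q)=-\sum_{a:P(a)>0}P(a)\log_2Q(a)$ is cross entropy; $D(\cdot\|\cdot)$ is informational divergence in bits; $Q_T^n$ is the iid pmf on $\mathcal{A}^n$. The empirical pmf of $a^n$ is $\pi(a^n)=\frac1n[n_1,\dots,n_L]$, with $n_i$ the number of occurrences of letter $i$. *)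

(* Defs.v *)
From mathcomp Require Import all_boot all_order all_algebra.
From mathcomp Require Import reals exp.
Set Implicit Arguments. Unset Strict Implicit. Unset Printing Implicit Defensive.
Import Order.TTheory GRing.Theory Num.Theory.
Local Open Scope ring_scope.

Section Defs.
Variable R : realType.

Definition log2 (x : R) : R := ln x / ln 2.

(* empirical pmf of a^n over the alphabet 'I_L = {1,...,L} (0-indexed) *)
Definition emp_pmf (L n : nat) (a : {ffun 'I_n -> 'I_L}) : 'I_L -> R :=
  fun i => #|[set k | a k == i]|%:R / n%:R.

Definition cross_entropy (L : nat) (P Q : 'I_L -> R) : R :=
  - \sum_(i | 0 < P i) P i * log2 (Q i).

Definition divergence (T : finType) (P Q : T -> R) : R :=
  \sum_(x | 0 < P x) P x * log2 (P x / Q x).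

Definition unif_pmf (L : nat) : 'I_L -> R := fun _ => L%:R^-1.

Definition typ_set (L n : nat) (Q : 'I_L -> R) (I : R) : {set {ffun 'I_n -> 'I_L}} :=
  [set a | cross_entropy (emp_pmf a) Q <= I].

Definition unif_on (T : finType) (S : {set T}) : T -> R :=
  fun x => if x \in S then #|S|%:R^-1 else 0.

Definition iid_pmf (L n : nat) (Q : 'I_L -> R) : {ffun 'I_n -> 'I_L} -> R :=
  fun a => \prod_(k < n) Q (a k).

End Defs.

(* Main.v *)
Require Import Defs.
From mathcomp Require Import all_boot all_order all_algebra.
From mathcomp Require Import reals exp sequences.
From mathcomp Require Import ring lra.
Import Order.TTheory GRing.Theory Num.Theory.
Local Open Scope ring_scope.
Set Implicit Arguments. Unset Strict Implicit. Unset Printing Implicit Defensive.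
Section Gen.
Variable R : realType.

Lemma ln_le_sub1 (y : R) : 0 < y -> ln y <= y - 1.
Proof. move=> y0; have := expR_ge1Dx (ln y); rewrite lnK ?posrE //; lra. Qed.

Lemma ln_lt_sub1 (y : R) : 0 < y -> y != 1 -> ln y < y - 1.
Proof.
move=> y0 y1; have : ln y != 0 by rewrite ln_eq0.
move=> /expR_gt1Dx; rewrite lnK ?posrE //; lra.
Qed.

Lemma gibbs_term (p r : R) : 0 < p -> 0 < r -> p - r <= p * ln (p / r).
Proof.
move=> p0 r0.
have h := ln_le_sub1 (divr_gt0 r0 p0).
have e : ln (p / r) = - ln (r / p) by rewrite -lnV ?posrE ?divr_gt0 // invf_div.
rewrite e; have : p * (r / p - 1) = r - p by rewrite mulrBr mulr1 mulrCA divff ?mulr1 // gt_eqF.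
move=> e2; rewrite mulrN lerNr opprB -e2 ler_pM2l //.
Qed.

Lemma gibbs_term_lt (p r : R) : 0 < p -> 0 < r -> p != r -> p - r < p * ln (p / r).
Proof.
move=> p0 r0 pr.
have rp1 : r / p != 1.
  apply/eqP => e; move: pr; rewrite -(divfK (lt0r_neq0 p0) r) e mul1r eqxx //.
have h := ln_lt_sub1 (divr_gt0 r0 p0) rp1.
have e : ln (p / r) = - ln (r / p) by rewrite -lnV ?posrE ?divr_gt0 // invf_div.
rewrite e; have : p * (r / p - 1) = r - p by rewrite mulrBr mulr1 mulrCA divff ?mulr1 // gt_eqF.
move=> e2; rewrite mulrN ltrNr opprB -e2 ltr_pM2l //.
Qed.

Lemma gibbs (T : finType) (A : pred T) (P Q : T -> R) :
  (forall x, A x -> 0 < P x) -> (forall x, A x -> 0 < Q x) ->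
  \sum_(x | A x) P x = 1 -> \sum_(x | A x) Q x <= 1 ->
  0 <= \sum_(x | A x) P x * ln (P x / Q x).
Proof.
move=> hP hQ sP sQ.
apply: le_trans (_ : \sum_(x | A x) (P x - Q x) <= _).
  by rewrite sumrB sP subr_ge0.
by apply: ler_sum => x Ax; apply: gibbs_term; auto.
Qed.

Lemma gibbs_lt (T : finType) (P Q : T -> R) :
  (forall x, 0 < P x) -> (forall x, 0 < Q x) ->
  \sum_x P x = 1 -> \sum_x Q x = 1 -> P <> Q ->
  0 < \sum_x P x * ln (P x / Q x).
Proof.
move=> hP hQ sP sQ PQ.
have [x0 hx0] : exists x, P x != Q x.
  apply/existsP; apply: contra_notT PQ => /existsPn h.
  by apply: boolp.funext => x; apply/eqP; move: (h x); rewrite negbK.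
apply: (@le_lt_trans _ _ (\sum_x (P x - Q x))); first by rewrite sumrB sP sQ subrr.
rewrite [X in X < _](bigD1 x0) //= [X in _ < X](bigD1 x0) //=.
apply: ltr_leD; first exact: gibbs_term_lt.
by apply: ler_sum => x _; apply: gibbs_term.
Qed.
End Gen.
Section Iid.
Variable R : realType.
Variables (L n : nat).
Implicit Types (W g : 'I_L -> R).

Lemma sum_prod W :
  \sum_(a : {ffun 'I_n -> 'I_L}) \prod_(k < n) W (a k) = (\sum_i W i) ^+ n.
Proof.
rewrite -(bigA_distr_bigA (fun (k : 'I_n) i => W i)) /=.
by rewrite prodr_const card_ord.
Qed.

Lemma prod_sel (j : 'I_n) (h : 'I_L -> R) (a : {ffun 'I_n -> 'I_L}) :
  \prod_(m < n) (if m == j then h (a m) else 1) = h (a j).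
Proof. by rewrite -big_mkcond /= big_pred1_eq. Qed.

Lemma cross_mom W g (j k : 'I_n) :
  \sum_i W i = 1 -> \sum_i W i * g i = 0 ->
  \sum_(a : {ffun 'I_n -> 'I_L}) (\prod_(m < n) W (a m)) * (g (a j) * g (a k))
  = if j == k then \sum_i W i * (g i * g i) else 0.
Proof.
move=> s1 s0.
pose F (m : 'I_n) (i : 'I_L) := W i * ((if m == j then g i else 1) * (if m == k then g i else 1)).
have -> : \sum_(a : {ffun 'I_n -> 'I_L}) (\prod_(m < n) W (a m)) * (g (a j) * g (a k))
   = \sum_(a : {ffun 'I_n -> 'I_L}) \prod_(m < n) F m (a m).
  apply: eq_bigr => a _; rewrite /F big_split /= big_split /=.
  by rewrite (prod_sel j g a) (prod_sel k g a).
rewrite -(bigA_distr_bigA F) /= /F.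
case: (eqVneq j k) => [<-|jk].
  rewrite (bigD1 j) //= [X in _ * X]big1 ?mulr1.
    by apply: eq_bigr => i _; rewrite eqxx.
  move=> m mj; rewrite (eq_bigr W) ?s1 // => i _; rewrite (negbTE mj) !mulr1 //.
rewrite (bigD1 j) //= (_ : \sum_i _ = 0) ?mul0r //.
rewrite (eq_bigr (fun i => W i * g i)) ?s0 // => i _; rewrite eqxx (negbTE jk) mulr1 //.
Qed.

Lemma second_mom W g :
  \sum_i W i = 1 -> \sum_i W i * g i = 0 ->
  \sum_(a : {ffun 'I_n -> 'I_L}) (\prod_(m < n) W (a m)) * (\sum_(k < n) g (a k)) ^+ 2
  = n%:R * \sum_i W i * (g i) ^+ 2.
Proof.
move=> s1 s0.
have e : forall a : {ffun 'I_n -> 'I_L}, (\prod_(m < n) W (a m)) * (\sum_(k < n) g (a k)) ^+ 2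
   = \sum_(j < n) \sum_(k < n) (\prod_(m < n) W (a m)) * (g (a j) * g (a k)).
  move=> a; rewrite expr2 mulr_suml mulr_sumr; apply: eq_bigr => j _.
  by rewrite mulr_sumr mulr_sumr; apply: eq_bigr => k _.
rewrite (eq_bigr _ (fun a _ => e a)) exchange_big /=.
under eq_bigr do rewrite exchange_big /=.
under eq_bigr do under eq_bigr do rewrite cross_mom //.
rewrite (eq_bigr (fun _ => \sum_i W i * (g i) ^+ 2)).
  by rewrite sumr_const card_ord mulr_natl.
move=> j _; rewrite (bigD1 j) //= eqxx [X in _ + X]big1 ?addr0.
  by apply: eq_bigr => i _; rewrite expr2.
by move=> k kj; rewrite eq_sym (negbTE kj).
Qed.

Lemma count_sum (a : {ffun 'I_n -> 'I_L}) (f : 'I_L -> R) :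
  \sum_(k < n) f (a k) = \sum_i #|[set k | a k == i]|%:R * f i.
Proof.
rewrite (partition_big (fun k => a k) predT) //=.
apply: eq_bigr => i _.
rewrite (eq_bigr (fun _ => f i)); last by move=> k /eqP ->.
by rewrite sumr_const mulr_natl cardsE.
Qed.
End Iid.

Lemma sum_sub (R : realType) (T : finType) (A B : pred T) (f : T -> R) :
  (forall x, A x -> B x) -> (forall x, B x -> 0 <= f x) ->
  \sum_(x | A x) f x <= \sum_(x | B x) f x.
Proof.
move=> AB f0; rewrite [X in X <= _]big_mkcond [X in _ <= X]big_mkcond /=.
apply: ler_sum => x _; case: ifP => Ax; first by rewrite AB.
by case: ifP => // /f0.
Qed.

Lemma L_gt0 (R : realType) L (Q : 'I_L -> R) : \sum_(a < L) Q a = 1 -> (0 < L)%N.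
Proof. case: L Q => // Q; rewrite big_ord0 => /eqP; rewrite eq_sym oner_eq0 //. Qed.

Section Basic.
Variables (R : realType) (L : nat) (Q : 'I_L -> R).
Hypotheses (hQpos : forall a, 0 < Q a) (hQsum : \sum_(a < L) Q a = 1).

Definition ell i := - ln (Q i).
Definition cst n (a : {ffun 'I_n -> 'I_L}) := \sum_(k < n) ell (a k).

Lemma Q_le1 i : Q i <= 1.
Proof.
rewrite -hQsum (bigD1 i) //= lerDl; apply: sumr_ge0 => j _; exact: ltW.
Qed.

Lemma ell_ge0 i : 0 <= ell i.
Proof. by rewrite /ell oppr_ge0 ln_le0 // Q_le1. Qed.

Lemma expR_ell i : expR (- ell i) = Q i.
Proof. by rewrite /ell opprK lnK ?posrE. Qed.

Lemma cst_ge0 n (a : {ffun 'I_n -> 'I_L}) : 0 <= cst a.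
Proof. by apply: sumr_ge0 => k _; apply: ell_ge0. Qed.

Lemma iid_cst n (a : {ffun 'I_n -> 'I_L}) : iid_pmf Q a = expR (- cst a).
Proof.
rewrite /iid_pmf /cst -sumrN expR_sum; apply: eq_bigr => k _; by rewrite expR_ell.
Qed.

Lemma ln2_gt0 : 0 < ln (2 : R).
Proof. by apply: ln_gt0; rewrite ltr1n. Qed.

Lemma cross_cst n (a : {ffun 'I_n -> 'I_L}) : (0 < n)%N ->
  cross_entropy (emp_pmf R a) Q = cst a / (n%:R * ln 2).
Proof.
move=> n0.
have n0' : (n%:R : R) != 0 by rewrite pnatr_eq0 -lt0n.
have l0 : ln (2 : R) != 0 by rewrite gt_eqF // ln2_gt0.
rewrite /cross_entropy big_mkcond /=.
rewrite (eq_bigr (fun i => emp_pmf R a i * log2 (Q i))); last first.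
  move=> i _; case: ifP => // /negbT; rewrite -leNgt => h.
  have -> : emp_pmf R a i = 0.
    apply/eqP; rewrite eq_le h /= /emp_pmf; apply: divr_ge0; exact: ler0n.
  by rewrite mul0r.
rewrite /cst count_sum mulr_suml -sumrN; apply: eq_bigr => i _.
rewrite /emp_pmf /log2 /ell; field; by rewrite l0 n0'.
Qed.

Lemma typ_setE n (I : R) : (0 < n)%N ->
  typ_set n Q I = [set a | cst a <= n%:R * (I * ln 2)].
Proof.
move=> n0; apply/setP => a; rewrite !inE cross_cst //.
have p : 0 < n%:R * ln (2:R) by rewrite mulr_gt0 ?ln2_gt0 // ltr0n.
by rewrite ler_pdivrMr // mulrCA.
Qed.

Lemma div_eq n (S : {set {ffun 'I_n -> 'I_L}}) : (0 < #|S|)%N ->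
  divergence (unif_on R S) (iid_pmf Q) =
  ((\sum_(a in S) cst a) / #|S|%:R - ln #|S|%:R) / ln 2.
Proof.
move=> S0.
have s0 : (0 : R) < #|S|%:R by rewrite ltr0n.
rewrite /divergence (eq_bigl (fun x => x \in S)); last first.
  move=> x; rewrite /unif_on; case: ifP => xS; first by rewrite invr_gt0.
  by rewrite ltxx.
rewrite (eq_bigr (fun x => (cst x / #|S|%:R - #|S|%:R^-1 * ln #|S|%:R) / ln 2)); last first.
  move=> x xS; rewrite /unif_on xS iid_cst /log2 ln_div ?posrE ?invr_gt0 ?expR_gt0 //.
  rewrite lnV ?posrE // expRK; field; rewrite gt_eqF ?ln2_gt0 //.
  by rewrite gt_eqF.
rewrite -mulr_suml sumrB -mulr_suml sumr_const.
congr (_ * _); congr (_ - _).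
rewrite -mulr_natr; field; by rewrite gt_eqF.
Qed.
End Basic.

Section Anal.
Variables (R : realType) (L : nat) (Q : 'I_L -> R).
Hypotheses (hQpos : forall a, 0 < Q a) (hQsum : \sum_(a < L) Q a = 1).
Hypothesis hQnu : Q <> @unif_pmf R L.
Variable J : R.
Hypothesis hJ : ln L%:R < J.

Local Notation ell := (ell Q).
Local Notation cst := (cst Q).

Lemma ellge0 i : 0 <= ell i. Proof. exact: ell_ge0 hQpos hQsum i. Qed.

Lemma lnL_ge0 : 0 <= ln (L%:R : R).
Proof. apply: ln_ge0; rewrite ler1n; exact: L_gt0 hQsum. Qed.

Lemma J_gt0 : 0 < J.
Proof. exact: le_lt_trans lnL_ge0 hJ. Qed.

Definition mu := (ln L%:R / J + 1) / 2.

Lemma x_ge0 : 0 <= ln (L%:R : R) / J.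
Proof. by rewrite divr_ge0 ?lnL_ge0 // ltW // J_gt0. Qed.
Lemma x_lt1 : ln (L%:R : R) / J < 1.
Proof. by rewrite ltr_pdivrMr ?J_gt0 // mul1r. Qed.

Lemma mu_gt0 : 0 < mu.
Proof. have := x_ge0; rewrite /mu; lra. Qed.
Lemma mu_lt1 : mu < 1.
Proof. have := x_lt1; rewrite /mu; lra. Qed.
Lemma muJ : ln L%:R < mu * J.
Proof.
have -> : mu * J = (ln L%:R + J) / 2.
  rewrite /mu; field; exact: lt0r_neq0 J_gt0.
have := hJ; lra.
Qed.

Definition Z := \sum_i expR (- (mu * ell i)).
Definition psi := ln Z.

Lemma Z_ge1 : 1 <= Z.
Proof.
rewrite -hQsum /Z; apply: ler_sum => i _; rewrite -(expR_ell hQpos) ler_expR.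
have := ellge0 i; have := mu_lt1; have := mu_gt0; nra.
Qed.
Lemma Z_gt0 : 0 < Z. Proof. exact: lt_le_trans ltr01 Z_ge1. Qed.
Lemma psi_ge0 : 0 <= psi. Proof. exact: ln_ge0 Z_ge1. Qed.

Definition W i := expR (- (mu * ell i) - psi).
Lemma W_gt0 i : 0 < W i. Proof. exact: expR_gt0. Qed.
Lemma W_sum1 : \sum_i W i = 1.
Proof.
rewrite /W (eq_bigr (fun i => expR (- (mu * ell i)) / Z)); last first.
  by move=> i _; rewrite expRB /psi lnK // posrE Z_gt0.
by rewrite -mulr_suml divff // gt_eqF // Z_gt0.
Qed.
Lemma lnW i : ln (W i) = - (mu * ell i) - psi.
Proof. by rewrite /W expRK. Qed.

Definition kappa := \sum_i W i * ell i.
Definition delta := (1 - mu) * kappa - psi.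
Definition V := \sum_i W i * (ell i - kappa) ^+ 2.

Lemma kappa_ge0 : 0 <= kappa.
Proof. apply: sumr_ge0 => i _; apply: mulr_ge0; [exact: ltW (W_gt0 i)| exact: ellge0]. Qed.

Lemma V_ge0 : 0 <= V.
Proof. apply: sumr_ge0 => i _; apply: mulr_ge0; [exact: ltW (W_gt0 i)| exact: sqr_ge0]. Qed.

Lemma sumW_lin (f : 'I_L -> R) (a b : R) :
  \sum_i W i * (a * f i + b) = a * \sum_i W i * f i + b.
Proof.
rewrite (eq_bigr (fun i => a * (W i * f i) + b * W i)); last by move=> i _; ring.
by rewrite big_split /= -!mulr_sumr W_sum1 mulr1.
Qed.

Lemma gibbs_unif : mu * kappa + psi <= ln L%:R.
Proof.
have L0 : (0 < L)%N := L_gt0 hQsum.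
have Lr : (0 : R) < L%:R by rewrite ltr0n.
have il : 0 < (L%:R : R)^-1 by rewrite invr_gt0.
have h := @gibbs R _ predT W (fun _ => L%:R^-1) (fun x _ => W_gt0 x)
  (fun _ _ => il) W_sum1.
have s1 : \sum_(x : 'I_L) (L%:R : R)^-1 <= 1.
  rewrite sumr_const card_ord -[_ *+ L]mulr_natr mulVf // gt_eqF //.
move: (h s1).
rewrite (eq_bigr (fun i => W i * (- mu * ell i + (ln L%:R - psi)))); last first.
  move=> i _; rewrite ln_div ?posrE ?W_gt0 ?invr_gt0 // lnV ?posrE // lnW; congr (_ * _); ring.
rewrite sumW_lin; rewrite -/kappa; lra.
Qed.

Lemma W_neq_Q : W <> Q.
Proof.
move=> e; apply: hQnu.
have one_mu : (1 - mu) != 0 by rewrite subr_eq0 eq_sym lt_eqF // mu_lt1.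
have h i : ell i = psi / (1 - mu).
  have := congr1 (fun f => ln (f i)) e; rewrite /= lnW /ell => e2.
  apply: (mulIf one_mu); rewrite divfK //; move: e2; rewrite /ell; lra.
pose q := expR (- (psi / (1 - mu))).
have hq i : Q i = q by rewrite -(expR_ell hQpos) h.
have L0 : (0 < L)%N := L_gt0 hQsum.
have : \sum_i Q i = L%:R * q.
  rewrite (eq_bigr (fun _ => q)) => [|i _]; last by rewrite hq.
  by rewrite sumr_const card_ord mulr_natl.
rewrite hQsum => /esym.
move=> Lq; apply: boolp.funext => i; rewrite hq /unif_pmf.
apply: (mulrI (_ : (L%:R : R) \is a GRing.unit)); first by rewrite unitfE pnatr_eq0 -lt0n.
by rewrite Lq mulfV // pnatr_eq0 -lt0n.
Qed.

Lemma delta_gt0 : 0 < delta.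
Proof.
have h := gibbs_lt W_gt0 hQpos W_sum1 hQsum W_neq_Q.
move: h; rewrite (eq_bigr (fun i => W i * ((1 - mu) * ell i + - psi))); last first.
  move=> i _; rewrite ln_div ?posrE ?W_gt0 ?hQpos // lnW; congr (_ * _).
  have -> : ln (Q i) = - ell i by rewrite /ell opprK.
  ring.
by rewrite sumW_lin -/kappa /delta.
Qed.

Lemma kappa_lt_J : kappa < J.
Proof.
rewrite -(ltr_pM2l mu_gt0); have := gibbs_unif; have := muJ; have := psi_ge0; lra.
Qed.

Lemma delta_le_kappa : delta <= kappa.
Proof. rewrite /delta; have := kappa_ge0; have := mu_gt0; have := psi_ge0; nra. Qed.

Definition eps := Num.min (delta / 8) (J - kappa).
Lemma eps_gt0 : 0 < eps.
Proof. rewrite lt_min; apply/andP; split; first by rewrite divr_gt0 ?delta_gt0.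
by rewrite subr_gt0 kappa_lt_J. Qed.
Lemma eps_le1 : eps <= delta / 8. Proof. by rewrite ge_min lexx. Qed.
Lemma eps_le2 : eps <= J - kappa. Proof. by rewrite ge_min lexx orbT. Qed.

Definition Wn n (a : {ffun 'I_n -> 'I_L}) := \prod_(k < n) W (a k).

Lemma Wn_eq n (a : {ffun 'I_n -> 'I_L}) : Wn a = expR (- (mu * cst a) - n%:R * psi).
Proof.
rewrite /Wn /W -expR_sum; congr expR.
rewrite sumrB sumrN /cst mulr_sumr sumr_const card_ord mulr_natl //.
Qed.

Lemma Wn_gt0 n (a : {ffun 'I_n -> 'I_L}) : 0 < Wn a.
Proof. by rewrite Wn_eq expR_gt0. Qed.

Lemma Wn_sum n : \sum_(a : {ffun 'I_n -> 'I_L}) Wn a = 1.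
Proof. by rewrite /Wn sum_prod W_sum1 expr1n. Qed.

Definition tt := kappa - 2 * eps.
Lemma tt_ge0 : 0 <= tt.
Proof. rewrite /tt; have := eps_le1; have := delta_le_kappa; have := delta_gt0; lra. Qed.

Lemma good_half n : (0 < n)%N -> 2 * V <= n%:R * eps ^+ 2 ->
  1 / 2 <= \sum_(a : {ffun 'I_n -> 'I_L} | `|cst a - n%:R * kappa| <= n%:R * eps) Wn a.
Proof.
move=> n0 hn.
pose X := fun a : {ffun 'I_n -> 'I_L} => cst a - n%:R * kappa.
have hX a : X a = \sum_(k < n) (ell (a k) - kappa).
  by rewrite /X sumrB sumr_const card_ord mulr_natl.
have mom : \sum_a Wn a * X a ^+ 2 = n%:R * V.
  rewrite (eq_bigr (fun a : {ffun 'I_n -> 'I_L} => (\prod_(m < n) W (a m)) * (\sum_(k < n) (ell (a k) - kappa)) ^+ 2)); last by move=> a _; rewrite hX.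
  apply: second_mom; first exact: W_sum1.
  rewrite (eq_bigr (fun i => W i * ell i - kappa * W i)); last by move=> i _; ring.
  by rewrite sumrB -mulr_sumr W_sum1 mulr1 subrr.
have ne : 0 < n%:R * eps by rewrite mulr_gt0 ?ltr0n ?eps_gt0.
have bad : (\sum_(a | ~~ (`|X a| <= n%:R * eps)) Wn a) * (n%:R * eps) ^+ 2 <= n%:R * V.
  rewrite -mom mulr_suml.
  apply: le_trans (_ : \sum_(a | ~~ (`|X a| <= n%:R * eps)) Wn a * X a ^+ 2 <= _).
    apply: ler_sum => a; rewrite -ltNge => h.
    apply: ler_wpM2l; first exact: ltW (Wn_gt0 a).
    rewrite -[X a ^+ 2]real_normK ?num_real // !expr2.
    by apply: ler_pM; [exact: ltW ne | exact: ltW ne | exact: ltW h | exact: ltW h].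
  apply: sum_sub => // a _; apply: mulr_ge0; [exact: ltW (Wn_gt0 a) | exact: sqr_ge0].
have tot := Wn_sum n; rewrite (bigID (fun a => `|X a| <= n%:R * eps)) /= in tot.
have nV : n%:R * V <= 1 / 2 * (n%:R * eps) ^+ 2.
  have n0' : (0 : R) <= n%:R by rewrite ler0n.
  rewrite exprMn expr2; nra.
have b2 : \sum_(a | ~~ (`|X a| <= n%:R * eps)) Wn a <= 1 / 2.
  rewrite -(ler_pM2r (_ : 0 < (n%:R * eps) ^+ 2)); last by rewrite exprn_gt0.
  exact: le_trans bad nV.
move: tot b2; rewrite /X; lra.
Qed.

Definition Sn n := [set a : {ffun 'I_n -> 'I_L} | cst a <= n%:R * J].
Definition E1 n := expR (- (mu * (n%:R * (kappa - eps))) - n%:R * psi).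
Definition E2 n := expR (- (mu * (n%:R * tt)) - n%:R * psi).

Lemma S_big n : (0 < n)%N -> 2 * V <= n%:R * eps ^+ 2 ->
  1 / 2 <= #|Sn n|%:R * E1 n.
Proof.
move=> n0 hn.
apply: le_trans (good_half n0 hn) _.
have n0' : (0 : R) <= n%:R by rewrite ler0n.
apply: le_trans (_ : \sum_(a | `|cst a - n%:R * kappa| <= n%:R * eps) E1 n <= _).
  apply: ler_sum => a; rewrite ler_norml => /andP [h1 h2].
  rewrite Wn_eq /E1 ler_expR lerD2r lerN2 ler_wpM2l ?(ltW mu_gt0) //.
  move: h1; rewrite mulrBr; lra.
apply: le_trans (_ : \sum_(a in Sn n) E1 n <= _).
  apply: sum_sub => [a|a _]; last exact: expR_ge0.
  rewrite ler_norml => /andP [_ h2]; rewrite inE.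
  have := ler_wpM2l n0' eps_le2; rewrite mulrBr; move: h2; lra.
by rewrite sumr_const mulr_natl.
Qed.

Lemma B_small n :
  (\sum_(a : {ffun 'I_n -> 'I_L}) (if cst a <= n%:R * tt then 1 else 0)) * E2 n <= 1.
Proof.
apply: (@le_trans _ _ (\sum_(a : {ffun 'I_n -> 'I_L}) Wn a)); last by rewrite Wn_sum.
rewrite mulr_suml; apply: ler_sum => a _; case: ifP => h.
  by rewrite mul1r Wn_eq /E2 ler_expR lerD2r lerN2 ler_wpM2l // ltW // mu_gt0.
by rewrite mul0r ltW ?Wn_gt0.
Qed.

Lemma avg_lb n (S : {set {ffun 'I_n -> 'I_L}}) :
  n%:R * tt * (#|S|%:R - \sum_(a : {ffun 'I_n -> 'I_L}) (if cst a <= n%:R * tt then 1 else 0))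
  <= \sum_(a in S) cst a.
Proof.
pose ind := fun a : {ffun 'I_n -> 'I_L} => if cst a <= n%:R * tt then (1:R) else 0.
have nt0 : 0 <= n%:R * tt by rewrite mulr_ge0 ?ler0n ?tt_ge0.
apply: le_trans (_ : \sum_(a in S) (n%:R * tt - n%:R * tt * ind a) <= _).
  rewrite sumrB sumr_const -mulr_sumr -[_ *+ #|S|]mulr_natr.
  have : \sum_(a in S) ind a <= \sum_a ind a.
    by apply: sum_sub => // a _; rewrite /ind; case: ifP.
  rewrite -/(ind _); move: (\sum_(a in S) ind a) (\sum_a ind a) => x y hxy.
  nra.
apply: ler_sum => a _; rewrite /ind; case: ifP => h.
  by rewrite mulr1 subrr (cst_ge0 hQpos hQsum).
by rewrite mulr0 subr0; move/negbT: h; rewrite -ltNge => /ltW.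
Qed.

Lemma lnS_le n (S : {set {ffun 'I_n -> 'I_L}}) : (0 < #|S|)%N ->
  ln #|S|%:R <= mu * ((\sum_(a in S) cst a) / #|S|%:R) + n%:R * psi.
Proof.
move=> S0; have s0 : (0:R) < #|S|%:R by rewrite ltr0n.
have is0 : 0 < (#|S|%:R : R)^-1 by rewrite invr_gt0.
have h := @gibbs R _ (mem S) (fun _ => #|S|%:R^-1) (@Wn n) (fun _ _ => is0) (fun x _ => Wn_gt0 x).
have s1 : \sum_(x in S) (#|S|%:R : R)^-1 = 1.
  by rewrite sumr_const -[_ *+ #|S|]mulr_natr mulVf // gt_eqF.
have s2 : \sum_(x in S) Wn x <= 1.
  by rewrite -(Wn_sum n); apply: sum_sub => // x _; exact: ltW (Wn_gt0 x).
move: (h s1 s2).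
rewrite (eq_bigr (fun a => #|S|%:R^-1 * (mu * cst a + (n%:R * psi - ln #|S|%:R)))); last first.
  move=> a _; rewrite ln_div ?posrE ?Wn_gt0 // lnV ?posrE // Wn_eq expRK; congr (_ * _); ring.
rewrite -mulr_sumr big_split /= -mulr_sumr sumr_const -[(_ - _) *+ _]mulr_natr.
have -> : (#|S|%:R : R)^-1 * (mu * (\sum_(a in S) cst a) + (n%:R * psi - ln #|S|%:R) * #|S|%:R)
   = mu * ((\sum_(a in S) cst a) / #|S|%:R) + (n%:R * psi - ln #|S|%:R).
  by field; rewrite gt_eqF.
lra.
Qed.

Lemma main_nat : exists d : R, 0 < d /\ exists N : nat, forall n, (N <= n)%N ->
  (0 < #|Sn n|)%N /\
  n%:R * d <= (\sum_(a in Sn n) cst a) / #|Sn n|%:R - ln #|Sn n|%:R.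
Proof.
have d0 := delta_gt0; have m0 := mu_gt0; have m1 := mu_lt1; have e0 := eps_gt0.
have k0 := kappa_ge0; have t0 := tt_ge0; have p0 := psi_ge0; have v0 := V_ge0.
exists (delta / 2); split; first by rewrite divr_gt0.
pose N1 := Num.bound (2 * V / eps ^+ 2).
pose N2 := Num.bound (8 * kappa / (delta * mu * eps)).
exists (maxn 1 (maxn N1 N2)) => n; rewrite !geq_max => /and3P [n1 hn1 hn2].
have nr : (1:R) <= n%:R by rewrite ler1n.
have e2 : 0 < eps ^+ 2 by rewrite exprn_gt0.
have dme : 0 < delta * mu * eps by apply: mulr_gt0 => //; apply: mulr_gt0.
have hV : 2 * V <= n%:R * eps ^+ 2.
  have := @archi_boundP R (2 * V / eps ^+ 2) (divr_ge0 (mulr_ge0 (ler0n _ 2) v0) (ltW e2)).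
  rewrite -/N1 => h; have : (N1%:R : R) <= n%:R by rewrite ler_nat.
  move=> h2; have := lt_le_trans h h2; rewrite ltr_pdivrMr // => h3; exact: ltW.
have hK : 8 * kappa <= n%:R * (delta * mu * eps).
  have := @archi_boundP R (8 * kappa / (delta * mu * eps)) (divr_ge0 (mulr_ge0 (ler0n _ 8) k0) (ltW dme)).
  rewrite -/N2 => h; have : (N2%:R : R) <= n%:R by rewrite ler_nat.
  move=> h2; have := lt_le_trans h h2; rewrite ltr_pdivrMr // => h3; exact: ltW.
have hS := S_big n1 hV.
have hB := B_small n.
have hA := avg_lb (Sn n).
have E2p : 0 < E2 n by apply: expR_gt0.
pose rho := expR (- (n%:R * mu * eps)).
have rp : 0 < rho by apply: expR_gt0.
have E1E2 : E1 n = rho * E2 n.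
  by rewrite /E1 /E2 /rho /tt -expRD; congr expR; ring.
have rho_le : rho * (n%:R * mu * eps) <= 1.
  have x0 : 0 <= n%:R * mu * eps.
    apply: mulr_ge0; last exact: ltW.
    by apply: mulr_ge0; [exact: ler0n | exact: ltW].
  rewrite /rho expRN mulrC ler_pdivrMr ?expR_gt0 // mul1r.
  have := expR_ge1Dx (n%:R * mu * eps); lra.
have s0 : (0 < #|Sn n|)%N.
  case: (posnP #|Sn n|) => [s0|//]; move: hS; rewrite s0 mul0r; lra.
split => //.
have hG := lnS_le s0.
move: hS hB hA hG; rewrite E1E2.
move: (\sum_(a in Sn n) cst a) (\sum_(a : {ffun 'I_n -> 'I_L}) _) => sc cnt.
have sr0 : (0 : R) < #|Sn n|%:R by rewrite ltr0n.
move: (#|Sn n|%:R : R) sr0 => sr sr0 hS hB hA hG.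
have cnt0 : cnt <= 2 * sr * rho.
  rewrite -(ler_pM2r E2p); have := hS; nra.
pose A := sc / sr.
have hsc : sc = A * sr by rewrite /A divfK // gt_eqF.
have F2 : n%:R * tt * (1 - 2 * rho) <= A.
  rewrite -(ler_pM2r sr0); move: hA; rewrite hsc.
  have nt0 : 0 <= n%:R * tt by rewrite mulr_ge0 ?ler0n.
  nra.
rewrite -/A in hG *.
have F6 : n%:R * kappa * rho <= n%:R * delta / 8.
  have me : 0 < mu * eps by rewrite mulr_gt0.
  rewrite -(ler_pM2r me).
  have : n%:R * kappa * rho * (mu * eps) <= kappa.
    have := ler_wpM2l k0 rho_le; rewrite mulr1; lra.
  nra.
have F7 : (1 - mu) * tt <= kappa.
  rewrite /tt; nra.
have nn : (0:R) <= n%:R by rewrite ler0n.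
have F8 : (1 - mu) * A >= (1 - mu) * (n%:R * tt * (1 - 2 * rho)).
  apply: ler_wpM2l; [lra | exact: F2].
have F9 : n%:R * ((1 - mu) * tt) * rho <= n%:R * kappa * rho.
  have nrho : 0 <= n%:R * rho by rewrite mulr_ge0 // ltW.
  nra.
have F10 : 2 * (1 - mu) * eps <= delta / 4.
  have := eps_le1; nra.
have F11 : (1 - mu) * tt - psi = delta - 2 * (1 - mu) * eps.
  by rewrite /tt /delta; ring.
have F12 : n%:R * (delta - 2 * (1 - mu) * eps) >= n%:R * (3 * delta / 4).
  apply: ler_wpM2l => //; lra.
nra.
Qed.
End Anal.

Theorem lemma6_gen (R : realType) (L : nat) (Q : 'I_L -> R) (I : R)
  (hQpos : forall a, 0 < Q a)
  (hQsum : \sum_(a < L) Q a = 1)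
  (hQnu : Q <> @unif_pmf R L)
  (hI : log2 L%:R < I) :
  exists c1 c2 : R, [/\ 0 < c1, c1 <= c2 &
    exists N : nat, forall n : nat, (N <= n)%N ->
      c1 * n%:R <= divergence (unif_on R (@typ_set R L n Q I)) (@iid_pmf R L n Q)
      /\ divergence (unif_on R (@typ_set R L n Q I)) (@iid_pmf R L n Q) <= c2 * n%:R].
Proof.
have l2 : 0 < ln (2 : R) := ln2_gt0 R.
have hJ : ln L%:R < I * ln 2 by move: hI; rewrite /log2 ltr_pdivrMr.
have [d [d0 [N hN]]] := main_nat hQpos hQsum hQnu hJ.
exists (d / ln 2), (Num.max (d / ln 2) I); split.
- by rewrite divr_gt0.
- by rewrite le_max lexx.
exists (maxn 1 N) => n; rewrite geq_max => /andP [n1 nN].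
have [s0 hd] := hN n nN.
have e : typ_set n Q I = Sn Q (I * ln 2) n by rewrite typ_setE.
rewrite e div_eq //.
have il : 0 < (ln (2:R))^-1 by rewrite invr_gt0.
split.
  rewrite mulrC mulrA; apply: ler_wpM2r; [exact: ltW | exact: hd].
have sr0 : (1 : R) <= #|Sn Q (I * ln 2) n|%:R by rewrite ler1n.
have lns : 0 <= ln (#|Sn Q (I * ln 2) n|%:R : R) by apply: ln_ge0.
have avg : (\sum_(a in Sn Q (I * ln 2) n) cst Q a) / #|Sn Q (I * ln 2) n|%:R <= n%:R * (I * ln 2).
  rewrite ler_pdivrMr ?(lt_le_trans ltr01 sr0) //.
  rewrite (_ : n%:R * (I * ln 2) * _ = \sum_(a in Sn Q (I * ln 2) n) (n%:R * (I * ln 2))).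
    by apply: ler_sum => a; rewrite inE.
  by rewrite sumr_const mulr_natr.
apply: (@le_trans _ _ (n%:R * I)).
  rewrite ler_pdivrMr //; lra.
rewrite mulrC; apply: ler_wpM2r; [exact: ler0n | by rewrite le_max lexx orbT].
Qed.

Unset Implicit Arguments.

Theorem lemma6 (R : realType) (L : nat) (Q : 'I_L -> R) (I : R)
  (hQpos : forall a, 0 < Q a)
  (hQsum : \sum_(a < L) Q a = 1)
  (hQnu : Q <> @unif_pmf R L)
  (hI : log2 L%:R < I) :
  exists c1 c2 : R, [/\ 0 < c1, c1 <= c2 &
    exists N : nat, forall n : nat, (N <= n)%N ->
      c1 * n%:R <= divergence (unif_on R (@typ_set R L n Q I)) (@iid_pmf R L n Q)
      /\ divergence (unif_on R (@typ_set R L n Q I)) (@iid_pmf R L n Q) <= c2 * n%:R].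
Proof. exact: (lemma6_gen hQpos hQsum hQnu hI). Qed.
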